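(* There exists a cubic (3-regular) bipartite graph on 20 vertices that is not B-factorizable; in fact there is an additional generator $v\in\overline{\mathbf N}(PM(V))\cap\mathrm{problem}(V)$ with $2v\in\mathbf N(PM(V))$ such that $E(v)$ is such a cubic bipartite graph.
   Context: Let $V$ be a finite set with $|V|$ even. $K=\binom{V}{2}$ is the set of 2-element subsets of $V$. An equal partition of $V$ is an unordered pair $\{H,A\}$ of disjoint subsets with $H\cup A=V$ and $|H|=|A|=|V|/2$; $C=C(V)$ is the set of equal partitions. For $c=\{H,A\}\in C$, $B_c$ is the complete bipartite graph with parts $H$ and $A$. Vectors live in $\mathbb N^{K\cup C}$ with $\mathbb N=\{0,1,2,\dots\}$; $v|_K$ denotes the restriction to coordinates in $K$. For $E\subseteq K$, $\chi_E\in\{0,1\}^K$ is its indicator vector; $\chi_K$ is the all-ones vector on $K$. For $E\subseteq K$ and $c\in C$, $\chi_{E,c}\in\mathbb N^{K\cup C}$ has $K$-components $\chi_E$ and $C$-components equal to the indicator of $c$. $PM(V)=\{\chi_{q,c}: c\in C,\ q\text{ a perfect matching of }B_c\}$. For $\mathcal M\subseteq\mathbb N^{K\cup C}$, $\mathbf N(\mathcal M)$ is the set of finite nonnegative integer combinations of elements of $\mathcal M$, and $\overline{\mathbf N}(\mathcal M)=\{v\in\mathbb N^{K\cup C}: kv\in\mathbf N(\mathcal M)\text{ for some integer }k\ge1\}$. For $v\in\mathbb N^{K\cup C}$, $E(v)=\{e\in K: v(e)=1\}$. $\mathrm{problem}(V)$ is the set of $v\in\mathbb N^{K\cup C}$ such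 that $v|_K\le\chi_K$, the graph $(V,E(v))$ is regular, and $\frac{|V|}{2}\sum_{c\in C}v(c)=\sum_{e\in K}v(e)$. A regular graph $G=(V,E)$ is B-factorizable if every $v\in\overline{\mathbf N}(PM(V))$ with $v|_K=\chi_E$ belongs to $\mathbf N(PM(V))$. The monoid $\overline{\mathbf N}(PM(V))$ is pointed, hence has a unique inclusion-minimal generating set (as a monoid), its Hilbert basis. An additional generator is an element of the Hilbert basis of $\overline{\mathbf N}(PM(V))$ that does not belong to $PM(V)$. *)

(* Defs.v *)
From mathcomp Require Import all_boot.
Set Implicit Arguments. Unset Strict Implicit. Unset Printing Implicit Defensive.

Section Defs.
Variable V : finType.

Definition edge := {e : {set V} | #|e| == 2}.

(* C = equal partitions {H, A}, encoded as the 2-element set of sets [set H; ~: H]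
   with |H| = |V|/2 *)
Definition is_eqpart (c : {set {set V}}) : bool :=
  [exists H : {set V}, (c == [set H; ~: H]) && (#|H|.*2 == #|V|)].
Definition eqpart := {c : {set {set V}} | is_eqpart c}.

(* vectors in N^(K u C) *)
Definition vec := ({ffun edge -> nat} * {ffun eqpart -> nat})%type.

Definition vzero : vec := ([ffun => 0], [ffun => 0]).
Definition vadd (u w : vec) : vec :=
  ([ffun e => u.1 e + w.1 e], [ffun c => u.2 c + w.2 c]).
Definition vscale (k : nat) (u : vec) : vec :=
  ([ffun e => k * u.1 e], [ffun c => k * u.2 c]).

Definition is_pm (c : eqpart) (q : {set edge}) : bool :=
  [forall e in q, forall P in val c, #|val e :&: P| == 1] &&
  [forall x : V, #|[set e in q | x \in val e]| == 1].

Definition chiEc (E : {set edge}) (c : eqpart) : vec :=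
  ([ffun e => nat_of_bool (e \in E)], [ffun c' => nat_of_bool (c' == c)]).

Definition PM (u : vec) : Prop := exists c q, is_pm c q /\ u = chiEc q c.

Inductive Ncomb (M : vec -> Prop) : vec -> Prop :=
| Ncomb0 : Ncomb M vzero
| NcombS m u : M m -> Ncomb M u -> Ncomb M (vadd m u).

Definition Nbar (M : vec -> Prop) (u : vec) : Prop :=
  exists k, 0 < k /\ Ncomb M (vscale k u).

Definition generates (Mon H : vec -> Prop) : Prop :=
  (forall u, H u -> Mon u) /\ (forall u, Mon u <-> Ncomb H u).

(* u belongs to the (unique) inclusion-minimal generating set of Mon *)
Definition in_hilbert_basis (Mon : vec -> Prop) (u : vec) : Prop :=
  exists H : vec -> Prop,
    generates Mon H /\
    (forall H' : vec -> Prop, (forall w, H' w -> H w) -> generates Mon H' ->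
       forall w, H w -> H' w) /\
    H u.

Definition additional_generator (u : vec) : Prop :=
  in_hilbert_basis (Nbar PM) u /\ ~ PM u.

Definition Ev (u : vec) : {set edge} := [set e | u.1 e == 1].

Definition deg (E : {set edge}) (x : V) : nat := #|[set e in E | x \in val e]|.
Definition regular (E : {set edge}) : Prop := forall x y, deg E x = deg E y.
Definition cubic (E : {set edge}) : Prop := forall x, deg E x = 3.
Definition bipartite (E : {set edge}) : Prop :=
  exists S : {set V}, forall e, e \in E -> #|val e :&: S| = 1.

Definition problem (u : vec) : Prop :=
  (forall e, u.1 e <= 1) /\ regular (Ev u) /\
  (#|V| %/ 2) * (\sum_(c : eqpart) u.2 c) = \sum_(e : edge) u.1 e.

Definition chiE (E : {set edge}) : {ffun edge -> nat} :=
  [ffun e => nat_of_bool (e \in E)].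

Definition Bfactorizable (E : {set edge}) : Prop :=
  forall u, Nbar PM u -> u.1 = chiE E -> Ncomb PM u.

End Defs.

(* Main.v *)
Require Import Defs.
From mathcomp Require Import all_boot.
From Stdlib Require Import Classical Lia.
Set Implicit Arguments. Unset Strict Implicit. Unset Printing Implicit Defensive.

Ltac slia := repeat (match goal with H : is_true (_ <= _) |- _ => move/leP: H => H end);
  try apply/leP; try rewrite <- ?plusE, <- ?multE, <- ?minusE in *; lia.

Section Gen.
Variable V : finType.

Lemma vecP (u w : vec V) : (forall e, u.1 e = w.1 e) -> (forall c, u.2 c = w.2 c) -> u = w.
Proof.
case: u => u1 u2; case: w => w1 w2 /= h1 h2.
by congr (_, _); apply/ffunP.
Qed.

Lemma vadd0l (u : vec V) : vadd (vzero V) u = u.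
Proof. by apply: vecP => x; rewrite /= !ffunE. Qed.
Lemma vadd0r (u : vec V) : vadd u (vzero V) = u.
Proof. by apply: vecP => x; rewrite /= !ffunE addn0. Qed.
Lemma vaddA (a b c : vec V) : vadd (vadd a b) c = vadd a (vadd b c).
Proof. by apply: vecP => x; rewrite /= !ffunE addnA. Qed.
Lemma vaddC (a b : vec V) : vadd a b = vadd b a.
Proof. by apply: vecP => x; rewrite /= !ffunE addnC. Qed.

Lemma Ncomb_add M (a b : vec V) : Ncomb M a -> Ncomb M b -> Ncomb M (vadd a b).
Proof.
elim=> [|m u Hm Hu IH] Hb; first by rewrite vadd0l.
rewrite vaddA; apply: NcombS => //; exact: IH.
Qed.

Lemma vscale0 (u : vec V) : vscale 0 u = vzero V.
Proof. by apply: vecP => x; rewrite /= !ffunE. Qed.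
Lemma vscaleS k (u : vec V) : vscale k.+1 u = vadd u (vscale k u).
Proof. by apply: vecP => x; rewrite /= !ffunE mulSn. Qed.
Lemma vscale1 (u : vec V) : vscale 1 u = u.
Proof. by apply: vecP => x; rewrite /= !ffunE mul1n. Qed.
Lemma vscaleD k (a b : vec V) : vscale k (vadd a b) = vadd (vscale k a) (vscale k b).
Proof. by apply: vecP => x; rewrite /= !ffunE mulnDr. Qed.
Lemma vscaleM k l (a : vec V) : vscale k (vscale l a) = vscale (k * l) a.
Proof. by apply: vecP => x; rewrite /= !ffunE mulnA. Qed.

Lemma Ncomb_scale M k (u : vec V) : Ncomb M u -> Ncomb M (vscale k u).
Proof.
move=> Hu; elim: k => [|k IH]; first by rewrite vscale0; exact: Ncomb0.
by rewrite vscaleS; apply: Ncomb_add.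
Qed.

Lemma Ncomb_single M (m : vec V) : M m -> Ncomb M m.
Proof. by move=> Hm; rewrite -(vadd0r m); apply: NcombS => //; exact: Ncomb0. Qed.

Lemma Nbar_add M (a b : vec V) : Nbar M a -> Nbar M b -> Nbar M (vadd a b).
Proof.
move=> [ka [ka0 Ha]] [kb [kb0 Hb]]; exists (ka * kb); split; first by rewrite muln_gt0 ka0.
rewrite vscaleD; apply: Ncomb_add.
  by rewrite mulnC -vscaleM; apply: Ncomb_scale.
by rewrite -vscaleM; apply: Ncomb_scale.
Qed.

Lemma Nbar0 M : Nbar M (vzero V).
Proof. by exists 1; split => //; rewrite vscale1; exact: Ncomb0. Qed.

Lemma Nbar_of_Ncomb M (u : vec V) : Ncomb M u -> Nbar M u.
Proof. by move=> H; exists 1; split => //; rewrite vscale1. Qed.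

Lemma Ncomb_inv M (w : vec V) : Ncomb M w ->
  w = vzero V \/ exists m u, M m /\ Ncomb M u /\ w = vadd m u.
Proof. by case=> [|m u Hm Hu]; [left|right; exists m, u]. Qed.

Definition vsize (u : vec V) := \sum_e u.1 e + \sum_c u.2 c.

Lemma vsizeD (a b : vec V) : vsize (vadd a b) = vsize a + vsize b.
Proof.
rewrite /vsize /=.
rewrite (eq_bigr (fun e => a.1 e + b.1 e)); last by move=> e _; rewrite ffunE.
rewrite (eq_bigr (fun e => a.2 e + b.2 e) (P := xpredT)); last by move=> e _; rewrite ffunE.
by rewrite !big_split /= addnACA.
Qed.

Lemma vsize0 (u : vec V) : vsize u = 0 -> u = vzero V.
Proof.
rewrite /vsize => /eqP; rewrite addn_eq0 !sum_nat_eq0 => /andP[/forallP h1 /forallP h2].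
apply: vecP => x /=; rewrite ffunE; [exact/eqP/(h1 x) | exact/eqP/(h2 x)].
Qed.

Definition irred M (u : vec V) :=
  Nbar M u /\ u <> vzero V /\
  forall a b, Nbar M a -> Nbar M b -> u = vadd a b -> a = vzero V \/ b = vzero V.

Lemma hilbert M (u : vec V) : irred M u -> in_hilbert_basis (Nbar M) u.
Proof.
move=> Hu; exists (irred M); split; last split => //.
- split; first by move=> w [].
  move=> w; split; last first.
    elim=> [|m w' [Hm _] _ IH]; first exact: Nbar0.
    exact: Nbar_add.
  move: {2}(vsize w) (leqnn (vsize w)) => n; elim: n w => [|n IH] w.
    rewrite leqn0 => /eqP /vsize0 -> _; exact: Ncomb0.
  move=> Hs Hw.
  case: (classic (w = vzero V)) => [->|wn0]; first exact: Ncomb0.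
  case: (classic (irred M w)) => [Hi|Hni].
    by rewrite -(vadd0r w); apply: NcombS => //; exact: Ncomb0.
  have [a [b [Ha [Hb [Hab [an0 bn0]]]]]] : exists a b, Nbar M a /\ Nbar M b /\ w = vadd a b /\ a <> vzero V /\ b <> vzero V.
    apply: NNPP => Hn; apply: Hni; split => //; split => // a b Ha Hb Hab.
    apply: NNPP => Hn2; apply: Hn; exists a, b; do 3 split => //.
    by split => ?; apply: Hn2; [left|right].
  have sa : 0 < vsize a by rewrite lt0n; apply/eqP => /vsize0.
  have sb : 0 < vsize b by rewrite lt0n; apply/eqP => /vsize0.
  have e := vsizeD a b; rewrite -Hab in e.
  rewrite Hab; apply: Ncomb_add; apply: IH => //; slia.
- move=> H' sub [H'M H'gen] w Hw.
  have : Ncomb H' w by apply/H'gen; case: Hw.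
  case/Ncomb_inv=> [w0|[m [u' [Hm [Hu' Ew]]]]]; first by case: Hw => _ [] /(_ w0).
  have Mu : Nbar M u' by apply/H'gen.
  have [_ [mn0 _]] := sub _ Hm.
  case: Hw => Mw [_ Hirr].
  case: (Hirr m u' (H'M _ Hm) Mu Ew) => // u0.
  by rewrite Ew u0 vadd0r.
Qed.


Definition sumL (L : seq (eqpart V * {set edge V})) : vec V :=
  foldr (fun p acc => vadd (chiEc p.2 p.1) acc) (vzero V) L.

Definition allpm (L : seq (eqpart V * {set edge V})) := all (fun p => is_pm p.1 p.2) L.

Lemma Ncomb_list (w : vec V) : Ncomb (@PM V) w -> exists L, allpm L /\ w = sumL L.
Proof.
elim=> [|m u [c [q [Hpm ->]]] _ [L [HL ->]]]; first by exists [::].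
by exists ((c,q) :: L); rewrite /allpm /= Hpm.
Qed.

Lemma sumL1 L (e : edge V) : (sumL L).1 e = count (fun p : eqpart V * {set edge V} => e \in p.2) L.
Proof. by elim: L => [|p L IH] /=; rewrite ffunE //= IH ffunE. Qed.

Lemma sumL2 L (c : eqpart V) : (sumL L).2 c = count (fun p : eqpart V * {set edge V} => p.1 == c) L.
Proof. by elim: L => [|p L IH] /=; rewrite ffunE //= IH ffunE eq_sym. Qed.

Definition ycnt (L : seq (eqpart V * {set edge V})) (c : eqpart V) (e : edge V) := count (fun p : eqpart V * {set edge V} => (p.1 == c) && (e \in p.2)) L.

Lemma card_deg (q : {set edge V}) (x : V) :
  #|[set e in q | x \in val e]| = \sum_(e : edge V | x \in val e) nat_of_bool (e \in q).
Proof.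
rewrite -sum1_card big_mkcond [RHS]big_mkcond /=; apply: eq_bigr => e _.
by rewrite inE; case: (x \in val e); case: (e \in q).
Qed.

Lemma Ncomb_sumL L : allpm L -> Ncomb (@PM V) (sumL L).
Proof.
elim: L => [|p L IH] /=; first by move=> _; exact: Ncomb0.
case/andP=> Hp HL; apply: NcombS; last exact: IH.
by exists p.1, p.2.
Qed.

Lemma deg_zero (Y : edge V -> nat) :
  (forall x, \sum_(e : edge V | x \in val e) Y e = 0) -> forall e, Y e = 0.
Proof.
move=> H e.
have : 0 < #|val e| by rewrite (eqP (valP e)).
case/card_gt0P => x Hx.
have := H x; rewrite (bigD1 e) //= => /eqP; rewrite addn_eq0 => /andP[/eqP -> _] //.
Qed.

Lemma pm_deg (c : eqpart V) (q : {set edge V}) (x : V) : is_pm c q -> \sum_(e : edge V | x \in val e) nat_of_bool (e \in q) = 1.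
Proof.
case/andP=> _ /forallP /(_ x) /eqP H.
rewrite -[RHS]H -sum1_card big_mkcond [RHS]big_mkcond /=; apply: eq_bigr => e _.
by rewrite inE; case: (x \in val e); case: (e \in q).
Qed.

Lemma ycnt_deg L (c : eqpart V) (x : V) : allpm L ->
  \sum_(e : edge V | x \in val e) ycnt L c e = count (fun p : eqpart V * {set edge V} => p.1 == c) L.
Proof.
elim: L => [|p L IH] /=.
  by move=> _; rewrite big1.
case/andP=> Hp HL; rewrite /ycnt /= big_split /= -/(ycnt L c) IH //.
congr (_ + _).
case: eqP => [_|_]; last by rewrite big1.
by apply: etrans (pm_deg x Hp); apply: eq_bigr.
Qed.

Lemma ycnt_supp L (c : eqpart V) (e : edge V) (P : {set V}) : allpm L -> P \in val c -> #|val e :&: P| != 1 -> ycnt L c e = 0.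
Proof.
move=> HL HP Hc; elim: L HL => [|p L IH] //= /andP[Hp HL].
rewrite -/(ycnt L c) IH // addn0.
case: eqP => [E|] //=; case He: (e \in p.2) => //.
case/andP: Hp => /forallP /(_ e) /implyP /(_ He) /forallP /(_ P) /implyP.
by rewrite E => /(_ HP); rewrite (negbTE Hc).
Qed.

Lemma ycnt_le L (c : eqpart V) (e : edge V) : ycnt L c e <= count (fun p : eqpart V * {set edge V} => e \in p.2) L.
Proof. by apply: sub_count => p /andP[]. Qed.

Lemma ycnt_split L (c1 c2 c3 : eqpart V) (e : edge V) : c1 != c2 -> c1 != c3 -> c2 != c3 ->
  (forall p, p \in L -> [|| p.1 == c1, p.1 == c2 | p.1 == c3]) ->
  count (fun p : eqpart V * {set edge V} => e \in p.2) L = ycnt L c1 e + ycnt L c2 e + ycnt L c3 e.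
Proof.
move=> n12 n13 n23; elim: L => [|p L IH] //= Hin.
rewrite /ycnt /= -!/(ycnt L _ _) IH; last by move=> p' Hp'; apply: Hin; rewrite inE Hp' orbT.
have := Hin p (mem_head _ _).
case: (e \in p.2); rewrite ?andbF ?andbT /=; last by move=> _; slia.
have n21 : c2 != c1 by rewrite eq_sym.
have n31 : c3 != c1 by rewrite eq_sym.
have n32 : c3 != c2 by rewrite eq_sym.
case/or3P => /eqP ->; rewrite ?eqxx ?(negbTE n12) ?(negbTE n13) ?(negbTE n23)
  ?(negbTE n21) ?(negbTE n31) ?(negbTE n32) /=; slia.
Qed.

End Gen.


Definition EA : seq nat := [:: 0; 0; 0; 1; 1; 1; 2; 2; 2; 3; 3; 3; 4; 4; 4; 5; 5; 5; 6; 6; 6; 7; 7; 7; 8; 8; 8; 9; 9; 9].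
Definition EB : seq nat := [:: 10; 15; 16; 11; 13; 14; 11; 15; 18; 16; 17; 19; 14; 18; 19; 11; 12; 14; 12; 15; 16; 12; 13; 17; 10; 13; 19; 10; 17; 18].
Definition HLs : seq (seq nat) := [:: [:: 0; 2; 3; 4; 6; 10; 11; 13; 14; 17]; [:: 1; 4; 6; 9; 10; 11; 12; 15; 17; 19]; [:: 2; 4; 5; 7; 8; 10; 14; 15; 16; 17]].
Definition PMS : seq (seq nat) := [:: [:: 2; 3; 7; 11; 13; 17; 18; 22; 24; 28]; [:: 1; 3; 8; 9; 14; 17; 18; 23; 25; 27]; [:: 0; 4; 7; 10; 12; 15; 20; 21; 26; 29]; [:: 1; 4; 6; 11; 12; 16; 20; 23; 24; 29]; [:: 0; 5; 6; 9; 13; 16; 19; 22; 26; 28]; [:: 2; 5; 8; 10; 14; 15; 19; 21; 25; 27]].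
Definition NB : seq (seq nat) := [:: [:: 0; 1; 2]; [:: 3; 4; 5]; [:: 6; 7; 8]; [:: 9; 10; 11]; [:: 12; 13; 14]; [:: 15; 16; 17]; [:: 18; 19; 20]; [:: 21; 22; 23]; [:: 24; 25; 26]; [:: 27; 28; 29]; [:: 0; 24; 27]; [:: 3; 6; 15]; [:: 16; 18; 21]; [:: 4; 22; 25]; [:: 5; 12; 17]; [:: 1; 7; 19]; [:: 2; 9; 20]; [:: 10; 23; 28]; [:: 8; 13; 29]; [:: 11; 14; 26]].
Definition COL : seq nat := [:: 0; 0; 1; 1; 2; 2].


Definition ov (m : nat) : 'I_20 := @Ordinal 20 (m %% 20) (ltn_pmod m (isT : 0 < 20)).
Definition av n := ov (nth 0 EA n).
Definition bv n := ov (nth 0 EB n).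
Definition all30 := iota 0 30.

Lemma in30 n : (n \in all30) = (n < 30). Proof. by rewrite mem_iota. Qed.
Lemma all30_lt : all (fun n => n < 30) all30. Proof. by apply/allP => n; rewrite in30. Qed.

Lemma tab_neq : all (fun n => nth 0 EA n %% 20 != nth 0 EB n %% 20) all30.
Proof. by vm_compute. Qed.

Lemma av_neq n : n < 30 -> av n != bv n.
Proof. by move=> Hn; apply: (allP tab_neq n); rewrite in30. Qed.

Lemma e0P : #|[set av 0; bv 0]| == 2.
Proof. by rewrite cards2 (@av_neq 0 isT). Qed.
Definition e0 : edge 'I_20 := Sub [set av 0; bv 0] e0P.
Definition mk n : edge 'I_20 := insubd e0 [set av n; bv n].

Lemma val_mk n : n < 30 -> val (mk n) = [set av n; bv n].
Proof. by move=> Hn; rewrite /mk insubdK // -topredE /= cards2 av_neq. Qed.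

Lemma tab_pair : all (fun m => all (fun n =>
  ((((nth 0 EA m %% 20) == (nth 0 EA n %% 20)) || ((nth 0 EA m %% 20) == (nth 0 EB n %% 20))) &&
   (((nth 0 EB m %% 20) == (nth 0 EA n %% 20)) || ((nth 0 EB m %% 20) == (nth 0 EB n %% 20))))
   == (m == n)) all30) all30.
Proof. by vm_compute. Qed.

Lemma pair_eq m n : m < 30 -> n < 30 ->
  (av m \in [set av n; bv n]) && (bv m \in [set av n; bv n]) = (m == n).
Proof.
move=> Hm Hn; rewrite !in_set2.
have Hm' : m \in all30 by rewrite in30.
have Hn' : n \in all30 by rewrite in30.
exact: (eqP (allP (allP tab_pair m Hm') n Hn')).
Qed.

Definition memS (s : seq nat) (e : edge 'I_20) :=
  has (fun n => (av n \in val e) && (bv n \in val e)) s.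

Arguments memS : simpl never.

Lemma edge_eq (e : edge 'I_20) a b : a != b -> a \in val e -> b \in val e -> val e = [set a; b].
Proof.
move=> ab ha hb; apply/esym/eqP; rewrite eqEcard cards2 ab (eqP (valP e)) leqnn andbT.
by apply/subsetP => x; rewrite in_set2 => /orP[] /eqP ->.
Qed.

Lemma memS_ex s e : all (fun n => n < 30) s -> memS s e -> exists2 n, n \in s & e = mk n.
Proof.
move=> Hs /hasP [n Hn /andP[ha hb]]; exists n => //; apply: val_inj.
rewrite val_mk ?(allP Hs n Hn) //; exact: edge_eq (av_neq (allP Hs n Hn)) ha hb.
Qed.

Lemma memS_mk s n : all (fun n => n < 30) s -> n < 30 -> memS s (mk n) = (n \in s).
Proof.
move=> Hs Hn; rewrite /memS val_mk //; apply/hasP/idP => [[m Hm]|Hn'].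
  by have Hm30 := allP Hs m Hm; rewrite pair_eq // => /eqP <-.
by exists n => //; rewrite pair_eq // eqxx.
Qed.

Lemma mk_inj m n : m < 30 -> n < 30 -> mk m = mk n -> m = n.
Proof.
move=> Hm Hn E; have Hs : all (fun n => n < 30) [:: n] by rewrite /= Hn.
by have := memS_mk Hs Hm; rewrite E (memS_mk Hs Hn) !inE eqxx => /esym /eqP.
Qed.

Lemma memS_sub s t e : {subset s <= t} -> memS s e -> memS t e.
Proof. by move=> st /hasP [n Hn H]; apply/hasP; exists n => //; apply: st. Qed.

Lemma sum_edges s (F : edge 'I_20 -> nat) : uniq s -> all (fun n => n < 30) s ->
  (forall e, ~~ memS s e -> F e = 0) -> \sum_e F e = \sum_(n <- s) F (mk n).
Proof.
move=> Us Hs HF.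
have -> : \sum_(n <- s) F (mk n) = \sum_(e <- map mk s) F e by rewrite big_map.
rewrite [RHS]big_uniq; last first.
  rewrite map_inj_in_uniq // => m n Hm Hn; apply: mk_inj; exact: (allP Hs).
rewrite [LHS](bigID (fun e => e \in map mk s)) /= [X in _ + X]big1 ?addn0 //.
move=> e He; apply: HF; apply: contra He => /(memS_ex Hs) [n Hn ->]; exact: map_f.
Qed.

Definition incn (m n : nat) := (m == nth 0 EA n %% 20) || (m == nth 0 EB n %% 20).

Lemma sum_vertex (x : 'I_20) (F : edge 'I_20 -> nat) : (forall e, ~~ memS all30 e -> F e = 0) ->
  \sum_(e : edge 'I_20 | x \in val e) F e = \sum_(n <- [seq n <- all30 | incn x n]) F (mk n).
Proof.
move=> HF; rewrite big_mkcond (sum_edges (s:=all30)) ?iota_uniq ?all30_lt //; last first.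
  by move=> e /HF ->; case: ifP.
rewrite big_filter [RHS]big_mkcond; apply: eq_big_seq => n; rewrite in30 => Hn.
by rewrite val_mk // in_set2 -!val_eqE.
Qed.

Definition nb m j := nth 0 (nth [::] NB m) j.

Lemma tab_nb : all (fun m => [seq n <- all30 | incn m n] == [:: nb m 0; nb m 1; nb m 2]) (iota 0 20).
Proof. by vm_compute. Qed.

Lemma tab_nb30 : all (fun m => (nb m 0 < 30) && (nb m 1 < 30) && (nb m 2 < 30)) (iota 0 20).
Proof. by vm_compute. Qed.

Lemma sum_vertex3 (x : 'I_20) (F : edge 'I_20 -> nat) : (forall e, ~~ memS all30 e -> F e = 0) ->
  \sum_(e : edge 'I_20 | x \in val e) F e = F (mk (nb x 0)) + F (mk (nb x 1)) + F (mk (nb x 2)).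
Proof.
move=> HF; rewrite sum_vertex //.
have Hx : (x : nat) \in iota 0 20 by rewrite mem_iota ltn_ord.
rewrite (eqP (allP tab_nb _ Hx)) !big_cons big_nil addn0 addnA //.
Qed.


Definition HL t := nth [::] HLs t.
Definition HH (h : seq nat) : {set 'I_20} := [set x : 'I_20 | (x : nat) \in h].

Lemma HHcard h : #|HH h| = count (fun m => m \in h) (iota 0 20).
Proof.
rewrite cardsE -sum1_card.
rewrite (_ : \sum_(i in _) 1 = \sum_(i < 20) (if (i : nat) \in h then 1 else 0)); last by rewrite big_mkcond.
rewrite -(big_mkord xpredT (fun i => if i \in h then 1 else 0)) -big_mkcond /= sum1_count //.
Qed.

Lemma cpP t : t < 3 -> is_eqpart [set HH (HL t); ~: HH (HL t)].
Proof.
move=> Ht; apply/existsP; exists (HH (HL t)); rewrite eqxx /= HHcard card_ord.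
by case: t Ht => [|[|[|]]] //; vm_compute.
Qed.

Definition c0 : eqpart 'I_20 := Sub _ (cpP (isT : 0 < 3)).
Definition cp_def t : eqpart 'I_20 := insubd c0 [set HH (HL t); ~: HH (HL t)].
Fact cp_key : unit. Proof. exact: tt. Qed.
Definition cp := locked_with cp_key cp_def.
Lemma cpE : cp = cp_def. Proof. by rewrite /cp unlock. Qed.

Lemma val_cp t : t < 3 -> val (cp t) = [set HH (HL t); ~: HH (HL t)].
Proof. by move=> Ht; rewrite cpE /cp_def insubdK // -topredE /= cpP. Qed.

Lemma ov_in m h : m < 20 -> (ov m \in HH h) = (m \in h).
Proof. by move=> Hm; rewrite inE /= modn_small. Qed.

Lemma cp_neq t t' m1 m2 : t < 3 -> t' < 3 -> m1 < 20 -> m2 < 20 ->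
  (m1 \in HL t) != (m1 \in HL t') -> (m2 \in HL t) == (m2 \in HL t') -> cp t != cp t'.
Proof.
move=> Ht Ht' H1 H2 D1 D2; apply/eqP => E.
have : HH (HL t) \in val (cp t') by rewrite -E val_cp // in_set2 eqxx.
rewrite val_cp // in_set2 => /orP[] /eqP E'.
  by have := congr1 (fun S : {set 'I_20} => ov m1 \in S) E'; rewrite /= !ov_in // => F; rewrite F eqxx in D1.
have := congr1 (fun S : {set 'I_20} => ov m2 \in S) E'; rewrite /= in_setC !ov_in // => F.
by move: D2; rewrite F; case: (m2 \in HL t').
Qed.

Lemma c01 : cp 0 != cp 1. Proof. by apply: (@cp_neq 0 1 0 4). Qed.
Lemma c02 : cp 0 != cp 2. Proof. by apply: (@cp_neq 0 2 0 1). Qed.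
Lemma c12 : cp 1 != cp 2. Proof. by apply: (@cp_neq 1 2 1 0). Qed.

Definition v1 : {ffun edge 'I_20 -> nat} := [ffun e => nat_of_bool (memS all30 e)].
Definition v2 : {ffun eqpart 'I_20 -> nat} := [ffun c => (c == cp 0) + (c == cp 1) + (c == cp 2)].
Definition v : vec 'I_20 := (v1, v2).

Lemma inEv e : (e \in Ev v) = memS all30 e.
Proof. by rewrite inE /= ffunE; case: (memS all30 e). Qed.

Lemma card1I (T : finType) (a : T) (S : {set T}) : #|[set a] :&: S| = (a \in S).
Proof.
case Ha: (a \in S).
  have -> : [set a] :&: S = [set a] by apply/setIidPl; rewrite sub1set.
  by rewrite cards1.
have -> : [set a] :&: S = set0 by apply/setP => y; rewrite !inE; case: eqP => // ->; rewrite Ha.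
by rewrite cards0.
Qed.

Lemma card2I (T : finType) (a b : T) (S : {set T}) : a != b ->
  #|[set a; b] :&: S| = (a \in S) + (b \in S).
Proof.
move=> ab; rewrite setIUl cardsU !card1I.
have -> : [set a] :&: S :&: ([set b] :&: S) = set0.
  by apply/setP => y; rewrite !inE; case: eqP => // ->; rewrite (negbTE ab) andbF.
by rewrite cards0 subn0.
Qed.

Definition crossn t n := ((nth 0 EA n %% 20) \in HL t) != ((nth 0 EB n %% 20) \in HL t).

Lemma cross_card t n P : t < 3 -> n < 30 -> P \in val (cp t) ->
  (#|val (mk n) :&: P| == 1) = crossn t n.
Proof.
move=> Ht Hn; rewrite val_cp // in_set2 => /orP[] /eqP ->;
  rewrite val_mk // card2I ?av_neq // !inE /crossn /=;
  by case: (_ \in HL t); case: (_ \in HL t).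
Qed.


Definition PMj j := nth [::] PMS j.
Definition pmset j : {set edge 'I_20} := [set e | memS (PMj j) e].

Lemma tab_pm : all (fun j => all (fun n => (n < 30) && crossn (nth 0 COL j) n) (PMj j)
  && (nth 0 COL j < 3)) (iota 0 6).
Proof. by vm_compute. Qed.

Lemma tab_pmdeg : all (fun j => all (fun m => (nb m 0 \in PMj j) + (nb m 1 \in PMj j) + (nb m 2 \in PMj j) == 1)
  (iota 0 20)) (iota 0 6).
Proof. by vm_compute. Qed.

Lemma x20 (x : 'I_20) : (x : nat) \in iota 0 20.
Proof. by rewrite mem_iota ltn_ord. Qed.

Lemma nb30 (x : 'I_20) i : i < 3 -> nb x i < 30.
Proof.
move=> Hi; have := allP tab_nb30 _ (x20 x).
by case: i Hi => [|[|[|]]] // _ /andP[/andP[]].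
Qed.

Lemma pm_ok j : j < 6 -> is_pm (cp (nth 0 COL j)) (pmset j).
Proof.
move=> Hj; have Hj' : j \in iota 0 6 by rewrite mem_iota.
have /andP[T1 T3] := allP tab_pm j Hj'.
have H30 : all (fun n => n < 30) (PMj j).
  by apply/allP => n Hn; case/andP: (allP T1 n Hn).
apply/andP; split.
  apply/forallP => e; apply/implyP; rewrite inE => /(memS_ex H30) [n Hn ->].
  apply/forallP => P; apply/implyP => HP.
  rewrite (@cross_card (nth 0 COL j) n P) //; first by case/andP: (allP T1 n Hn).
  exact: (allP H30).
apply/forallP => x; rewrite card_deg sum_vertex3; last first.
  have Hsub : {subset PMj j <= all30} by move=> n /(allP H30); rewrite in30.
  move=> e He; rewrite inE; case Hs: (memS _ e) => //.
  by rewrite (memS_sub Hsub Hs) in He.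
rewrite !inE !memS_mk ?nb30 //.
exact: (allP (allP tab_pmdeg j Hj') _ (x20 x)).
Qed.

Lemma cubic_v : cubic (Ev v).
Proof.
move=> x; rewrite /deg card_deg sum_vertex3; last by move=> e He; rewrite inEv (negbTE He).
by rewrite !inEv !memS_mk ?all30_lt ?nb30 // !in30 !nb30.
Qed.

Lemma tab_bip : all (fun n => ((nth 0 EA n %% 20) \in iota 0 10) + ((nth 0 EB n %% 20) \in iota 0 10) == 1) all30.
Proof. by vm_compute. Qed.

Lemma bip_v : bipartite (Ev v).
Proof.
exists (HH (iota 0 10)) => e; rewrite inEv => /(memS_ex all30_lt) [n Hn ->].
rewrite val_mk -?in30 // card2I ?av_neq -?in30 // !in_set.
apply/eqP; exact: (allP tab_bip n Hn).
Qed.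

Lemma sum_eq1 (T : finType) (a : T) : \sum_(c : T) nat_of_bool (c == a) = 1.
Proof. by rewrite (bigD1 a) //= eqxx big1 ?addn0 // => c /negbTE ->. Qed.

Lemma sumv1 : \sum_(e : edge 'I_20) v.1 e = 30.
Proof.
rewrite (sum_edges (s:=all30)) ?iota_uniq ?all30_lt //; last by move=> e He; rewrite /= ffunE (negbTE He).
rewrite (eq_big_seq (fun _ => 1)); first by rewrite sum1_size size_iota.
by move=> n Hn; rewrite /= ffunE memS_mk ?all30_lt -?in30 // Hn.
Qed.



Definition Lv := [seq (cp (nth 0 COL j), pmset j) | j <- iota 0 6].

Lemma allpm_Lv : allpm Lv.
Proof. by apply/allP => p /mapP [j Hj ->]; apply: pm_ok; rewrite mem_iota in Hj. Qed.

Lemma tab_double : all (fun n => 2 == (n \in PMj 0) + ((n \in PMj 1) + ((n \in PMj 2) + ((n \in PMj 3)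
   + ((n \in PMj 4) + ((n \in PMj 5) + 0)))))) all30.
Proof. by vm_compute. Qed.

Lemma PMj_sub j : j < 6 -> {subset PMj j <= all30}.
Proof.
move=> Hj; have Hj' : j \in iota 0 6 by rewrite mem_iota.
have /andP[T1 _] := allP tab_pm j Hj'.
by move=> n /(allP T1) /andP[]; rewrite in30.
Qed.

Lemma double_v : vscale 2 v = sumL Lv.
Proof.
apply: vecP => [e|c]; last first.
  rewrite sumL2 /= !ffunE ![cp _ == c]eq_sym.
  by case: (c == cp 0); case: (c == cp 1); case: (c == cp 2).
rewrite sumL1 /= !ffunE /pmset !inE.
case Hm: (memS all30 e).
  case/(memS_ex all30_lt): Hm => n Hn ->.
  have H30 : all (fun n => n < 30) (PMj 0) by apply/allP => k /(PMj_sub (isT : 0 < 6)); rewrite in30.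
  have P30 j : j < 6 -> all (fun n => n < 30) (PMj j) by move=> Hj; apply/allP => k /(PMj_sub Hj); rewrite in30.
  rewrite !memS_mk ?P30 -?in30 //= muln1.
  exact/eqP/(allP tab_double n Hn).
have F j : j < 6 -> memS (PMj j) e = false.
  by move=> Hj; apply/negbTE; apply: contraFN Hm; apply: memS_sub; apply: PMj_sub.
by rewrite !F.
Qed.

Lemma sum3 (T : finType) (F : T -> nat) a b c :
  (forall x, F x = (x == a) + (x == b) + (x == c)) -> \sum_x F x = 3.
Proof.
move=> HF; rewrite (eq_bigr _ (fun x _ => HF x)) !big_split /=.
by rewrite !sum_eq1.
Qed.

Lemma sumv2 : \sum_(c : eqpart 'I_20) v.2 c = 3.
Proof.
refine (@sum3 (eqpart 'I_20) v.2 (cp 0) (cp 1) (cp 2) _).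
by move=> x; rewrite /= ffunE.
Qed.

Lemma problem_v : problem v.
Proof.
split; first by move=> e; rewrite /= ffunE leq_b1.
split; first by move=> x y; rewrite !cubic_v.
by rewrite card_ord sumv1 sumv2.
Qed.

Lemma v2cp t : t < 3 -> v.2 (cp t) = 1.
Proof.
rewrite /= ffunE.
have n10 : cp 1 != cp 0 by rewrite eq_sym c01.
have n20 : cp 2 != cp 0 by rewrite eq_sym c02.
have n21 : cp 2 != cp 1 by rewrite eq_sym c12.
by case: t => [|[|[|]]] // _; rewrite eqxx ?(negbTE c01) ?(negbTE c02) ?(negbTE c12)
  ?(negbTE n10) ?(negbTE n20) ?(negbTE n21).
Qed.

Lemma v1mk n : n < 30 -> v.1 (mk n) = 1.
Proof. by move=> Hn; rewrite /= ffunE memS_mk ?all30_lt // in30 Hn. Qed.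

Lemma decomp (a : vec 'I_20) : Nbar (@PM 'I_20) a -> (forall c, a.2 c <= v.2 c) ->
  exists k (Y : nat -> edge 'I_20 -> nat), [/\ 0 < k,
   (forall e, Y 0 e + Y 1 e + Y 2 e = k * a.1 e),
   (forall t x, t < 3 -> \sum_(e : edge 'I_20 | x \in val e) Y t e = k * a.2 (cp t)),
   (forall t n, t < 3 -> n < 30 -> crossn t n = false -> Y t (mk n) = 0) &
   ((forall t, t < 3 -> a.2 (cp t) = 0) -> a = vzero 'I_20)].
Proof.
move=> [k [k0 /Ncomb_list [L [HLL EL]]]] Ha2.
have E1 e : k * a.1 e = count (fun p : eqpart 'I_20 * {set edge 'I_20} => e \in p.2) L.
  by rewrite -sumL1 -EL /= ffunE.
have E2 c : k * a.2 c = count (fun p : eqpart 'I_20 * {set edge 'I_20} => p.1 == c) L.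
  by rewrite -sumL2 -EL /= ffunE.
have Hin p : p \in L -> [|| p.1 == cp 0, p.1 == cp 1 | p.1 == cp 2].
  move=> Hp.
  have : 0 < count (fun p' : eqpart 'I_20 * {set edge 'I_20} => p'.1 == p.1) L.
    by rewrite -has_count; apply/hasP; exists p.
  rewrite -E2 muln_gt0 => /andP[_ H]; have := leq_trans H (Ha2 p.1); rewrite /= ffunE.
  by case: (p.1 == cp 0); case: (p.1 == cp 1); case: (p.1 == cp 2).
exists k, (fun t e => ycnt L (cp t) e); split => //.
- by move=> e; rewrite E1 (ycnt_split e c01 c02 c12 Hin).
- by move=> t x _; rewrite ycnt_deg // E2.
- move=> t n Ht Hn Hc /=.
  refine (@ycnt_supp 'I_20 L (cp t) (mk n) (HH (HL t)) HLL _ _).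
    by rewrite val_cp // in_set2 eqxx.
  by rewrite (@cross_card t n) ?Hc // val_cp // in_set2 eqxx.
move=> H0.
have L0 : L = [::].
  move: Hin E2; clear -H0; case: L => [|p L'] // Hin E2.
  have E := E2 p.1; rewrite /= eqxx add1n in E.
  by case/or3P: (Hin p (mem_head _ _)) => /eqP Ep; rewrite Ep H0 // muln0 in E.
apply: vecP => [e|c] /=; rewrite ffunE.
  by have := E1 e; rewrite L0 /= => /eqP; rewrite muln_eq0 (negbTE (lt0n_neq0 k0)) => /eqP.
by have := E2 c; rewrite L0 /= => /eqP; rewrite muln_eq0 (negbTE (lt0n_neq0 k0)) => /eqP.
Qed.


Ltac snia := repeat (match goal with H : is_true (_ <= _) |- _ => move/leP: H => H end);
  try apply/leP; try rewrite <- ?plusE, <- ?multE, <- ?minusE in *; nia.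

Lemma arith1 ka kb x0 x1 x2 y0 y1 y2 a b : x0+x1+x2 = ka*a -> y0+y1+y2 = kb*b -> a + b = 1 ->
  (kb*x0 + ka*y0) + (kb*x1+ka*y1) + (kb*x2+ka*y2) = ka*kb.
Proof. intros. snia. Qed.

Lemma core (K : nat) (g : nat -> nat -> nat) : 0 < K ->
  (forall n, n < 30 -> g 0 n + g 1 n + g 2 n = K) ->
  (forall t m, t < 3 -> m < 20 -> g t (nb m 0) + g t (nb m 1) + g t (nb m 2) = K) ->
  (forall t n, t < 3 -> n < 30 -> crossn t n = false -> g t n = 0) ->
  forall i, i < 3 -> (forall n, n < 30 -> g i n = 0 \/ g i n = K) -> False.
Proof.
move=> K0 S D Z i Hi I.
have s0 : g 0 0 + g 1 0 + g 2 0 = K := S 0 isT.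
have s1 : g 0 1 + g 1 1 + g 2 1 = K := S 1 isT.
have s2 : g 0 2 + g 1 2 + g 2 2 = K := S 2 isT.
have s3 : g 0 3 + g 1 3 + g 2 3 = K := S 3 isT.
have s4 : g 0 4 + g 1 4 + g 2 4 = K := S 4 isT.
have s5 : g 0 5 + g 1 5 + g 2 5 = K := S 5 isT.
have s6 : g 0 6 + g 1 6 + g 2 6 = K := S 6 isT.
have s7 : g 0 7 + g 1 7 + g 2 7 = K := S 7 isT.
have s8 : g 0 8 + g 1 8 + g 2 8 = K := S 8 isT.
have s9 : g 0 9 + g 1 9 + g 2 9 = K := S 9 isT.
have s10 : g 0 10 + g 1 10 + g 2 10 = K := S 10 isT.
have s11 : g 0 11 + g 1 11 + g 2 11 = K := S 11 isT.
have s12 : g 0 12 + g 1 12 + g 2 12 = K := S 12 isT.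
have s13 : g 0 13 + g 1 13 + g 2 13 = K := S 13 isT.
have s14 : g 0 14 + g 1 14 + g 2 14 = K := S 14 isT.
have s15 : g 0 15 + g 1 15 + g 2 15 = K := S 15 isT.
have s16 : g 0 16 + g 1 16 + g 2 16 = K := S 16 isT.
have s17 : g 0 17 + g 1 17 + g 2 17 = K := S 17 isT.
have s18 : g 0 18 + g 1 18 + g 2 18 = K := S 18 isT.
have s19 : g 0 19 + g 1 19 + g 2 19 = K := S 19 isT.
have s20 : g 0 20 + g 1 20 + g 2 20 = K := S 20 isT.
have s21 : g 0 21 + g 1 21 + g 2 21 = K := S 21 isT.
have s22 : g 0 22 + g 1 22 + g 2 22 = K := S 22 isT.
have s23 : g 0 23 + g 1 23 + g 2 23 = K := S 23 isT.
have s24 : g 0 24 + g 1 24 + g 2 24 = K := S 24 isT.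
have s25 : g 0 25 + g 1 25 + g 2 25 = K := S 25 isT.
have s26 : g 0 26 + g 1 26 + g 2 26 = K := S 26 isT.
have s27 : g 0 27 + g 1 27 + g 2 27 = K := S 27 isT.
have s28 : g 0 28 + g 1 28 + g 2 28 = K := S 28 isT.
have s29 : g 0 29 + g 1 29 + g 2 29 = K := S 29 isT.
have d0_0 : g 0 0 + g 0 1 + g 0 2 = K := D 0 0 isT isT.
have d0_1 : g 0 3 + g 0 4 + g 0 5 = K := D 0 1 isT isT.
have d0_2 : g 0 6 + g 0 7 + g 0 8 = K := D 0 2 isT isT.
have d0_3 : g 0 9 + g 0 10 + g 0 11 = K := D 0 3 isT isT.
have d0_4 : g 0 12 + g 0 13 + g 0 14 = K := D 0 4 isT isT.
have d0_5 : g 0 15 + g 0 16 + g 0 17 = K := D 0 5 isT isT.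
have d0_6 : g 0 18 + g 0 19 + g 0 20 = K := D 0 6 isT isT.
have d0_7 : g 0 21 + g 0 22 + g 0 23 = K := D 0 7 isT isT.
have d0_8 : g 0 24 + g 0 25 + g 0 26 = K := D 0 8 isT isT.
have d0_9 : g 0 27 + g 0 28 + g 0 29 = K := D 0 9 isT isT.
have d0_10 : g 0 0 + g 0 24 + g 0 27 = K := D 0 10 isT isT.
have d0_11 : g 0 3 + g 0 6 + g 0 15 = K := D 0 11 isT isT.
have d0_12 : g 0 16 + g 0 18 + g 0 21 = K := D 0 12 isT isT.
have d0_13 : g 0 4 + g 0 22 + g 0 25 = K := D 0 13 isT isT.
have d0_14 : g 0 5 + g 0 12 + g 0 17 = K := D 0 14 isT isT.
have d0_15 : g 0 1 + g 0 7 + g 0 19 = K := D 0 15 isT isT.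
have d0_16 : g 0 2 + g 0 9 + g 0 20 = K := D 0 16 isT isT.
have d0_17 : g 0 10 + g 0 23 + g 0 28 = K := D 0 17 isT isT.
have d0_18 : g 0 8 + g 0 13 + g 0 29 = K := D 0 18 isT isT.
have d0_19 : g 0 11 + g 0 14 + g 0 26 = K := D 0 19 isT isT.
have d1_0 : g 1 0 + g 1 1 + g 1 2 = K := D 1 0 isT isT.
have d1_1 : g 1 3 + g 1 4 + g 1 5 = K := D 1 1 isT isT.
have d1_2 : g 1 6 + g 1 7 + g 1 8 = K := D 1 2 isT isT.
have d1_3 : g 1 9 + g 1 10 + g 1 11 = K := D 1 3 isT isT.
have d1_4 : g 1 12 + g 1 13 + g 1 14 = K := D 1 4 isT isT.
have d1_5 : g 1 15 + g 1 16 + g 1 17 = K := D 1 5 isT isT.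
have d1_6 : g 1 18 + g 1 19 + g 1 20 = K := D 1 6 isT isT.
have d1_7 : g 1 21 + g 1 22 + g 1 23 = K := D 1 7 isT isT.
have d1_8 : g 1 24 + g 1 25 + g 1 26 = K := D 1 8 isT isT.
have d1_9 : g 1 27 + g 1 28 + g 1 29 = K := D 1 9 isT isT.
have d1_10 : g 1 0 + g 1 24 + g 1 27 = K := D 1 10 isT isT.
have d1_11 : g 1 3 + g 1 6 + g 1 15 = K := D 1 11 isT isT.
have d1_12 : g 1 16 + g 1 18 + g 1 21 = K := D 1 12 isT isT.
have d1_13 : g 1 4 + g 1 22 + g 1 25 = K := D 1 13 isT isT.
have d1_14 : g 1 5 + g 1 12 + g 1 17 = K := D 1 14 isT isT.
have d1_15 : g 1 1 + g 1 7 + g 1 19 = K := D 1 15 isT isT.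
have d1_16 : g 1 2 + g 1 9 + g 1 20 = K := D 1 16 isT isT.
have d1_17 : g 1 10 + g 1 23 + g 1 28 = K := D 1 17 isT isT.
have d1_18 : g 1 8 + g 1 13 + g 1 29 = K := D 1 18 isT isT.
have d1_19 : g 1 11 + g 1 14 + g 1 26 = K := D 1 19 isT isT.
have d2_0 : g 2 0 + g 2 1 + g 2 2 = K := D 2 0 isT isT.
have d2_1 : g 2 3 + g 2 4 + g 2 5 = K := D 2 1 isT isT.
have d2_2 : g 2 6 + g 2 7 + g 2 8 = K := D 2 2 isT isT.
have d2_3 : g 2 9 + g 2 10 + g 2 11 = K := D 2 3 isT isT.
have d2_4 : g 2 12 + g 2 13 + g 2 14 = K := D 2 4 isT isT.
have d2_5 : g 2 15 + g 2 16 + g 2 17 = K := D 2 5 isT isT.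
have d2_6 : g 2 18 + g 2 19 + g 2 20 = K := D 2 6 isT isT.
have d2_7 : g 2 21 + g 2 22 + g 2 23 = K := D 2 7 isT isT.
have d2_8 : g 2 24 + g 2 25 + g 2 26 = K := D 2 8 isT isT.
have d2_9 : g 2 27 + g 2 28 + g 2 29 = K := D 2 9 isT isT.
have d2_10 : g 2 0 + g 2 24 + g 2 27 = K := D 2 10 isT isT.
have d2_11 : g 2 3 + g 2 6 + g 2 15 = K := D 2 11 isT isT.
have d2_12 : g 2 16 + g 2 18 + g 2 21 = K := D 2 12 isT isT.
have d2_13 : g 2 4 + g 2 22 + g 2 25 = K := D 2 13 isT isT.
have d2_14 : g 2 5 + g 2 12 + g 2 17 = K := D 2 14 isT isT.
have d2_15 : g 2 1 + g 2 7 + g 2 19 = K := D 2 15 isT isT.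
have d2_16 : g 2 2 + g 2 9 + g 2 20 = K := D 2 16 isT isT.
have d2_17 : g 2 10 + g 2 23 + g 2 28 = K := D 2 17 isT isT.
have d2_18 : g 2 8 + g 2 13 + g 2 29 = K := D 2 18 isT isT.
have d2_19 : g 2 11 + g 2 14 + g 2 26 = K := D 2 19 isT isT.
have z0_0 : g 0 0 = 0 := Z 0 0 isT isT erefl.
have z0_6 : g 0 6 = 0 := Z 0 6 isT isT erefl.
have z0_10 : g 0 10 = 0 := Z 0 10 isT isT erefl.
have z0_12 : g 0 12 = 0 := Z 0 12 isT isT erefl.
have z0_16 : g 0 16 = 0 := Z 0 16 isT isT erefl.
have z0_21 : g 0 21 = 0 := Z 0 21 isT isT erefl.
have z0_26 : g 0 26 = 0 := Z 0 26 isT isT erefl.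
have z0_29 : g 0 29 = 0 := Z 0 29 isT isT erefl.
have z1_2 : g 1 2 = 0 := Z 1 2 isT isT erefl.
have z1_3 : g 1 3 = 0 := Z 1 3 isT isT erefl.
have z1_8 : g 1 8 = 0 := Z 1 8 isT isT erefl.
have z1_9 : g 1 9 = 0 := Z 1 9 isT isT erefl.
have z1_14 : g 1 14 = 0 := Z 1 14 isT isT erefl.
have z1_17 : g 1 17 = 0 := Z 1 17 isT isT erefl.
have z1_18 : g 1 18 = 0 := Z 1 18 isT isT erefl.
have z1_19 : g 1 19 = 0 := Z 1 19 isT isT erefl.
have z1_22 : g 1 22 = 0 := Z 1 22 isT isT erefl.
have z1_25 : g 1 25 = 0 := Z 1 25 isT isT erefl.
have z1_27 : g 1 27 = 0 := Z 1 27 isT isT erefl.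
have z1_28 : g 1 28 = 0 := Z 1 28 isT isT erefl.
have z2_3 : g 2 3 = 0 := Z 2 3 isT isT erefl.
have z2_4 : g 2 4 = 0 := Z 2 4 isT isT erefl.
have z2_7 : g 2 7 = 0 := Z 2 7 isT isT erefl.
have z2_11 : g 2 11 = 0 := Z 2 11 isT isT erefl.
have z2_12 : g 2 12 = 0 := Z 2 12 isT isT erefl.
have z2_17 : g 2 17 = 0 := Z 2 17 isT isT erefl.
have z2_18 : g 2 18 = 0 := Z 2 18 isT isT erefl.
have z2_23 : g 2 23 = 0 := Z 2 23 isT isT erefl.
have z2_24 : g 2 24 = 0 := Z 2 24 isT isT erefl.
have z2_29 : g 2 29 = 0 := Z 2 29 isT isT erefl.
clear S D Z.
case: i Hi I => [|[|[|]]] // _ I.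
- have [b1|b1] := I 1 isT.
  { have [b15|b15] := I 15 isT.
    { have [b22|b22] := I 22 isT.
      { slia. }
      { slia. } }
    { have [b22|b22] := I 22 isT.
      { slia. }
      { slia. } } }
  { have [b15|b15] := I 15 isT.
    { have [b22|b22] := I 22 isT.
      { slia. }
      { slia. } }
    { have [b22|b22] := I 22 isT.
      { slia. }
      { slia. } } }
- have [b0|b0] := I 0 isT.
  { slia. }
  { slia. }
- have [b6|b6] := I 6 isT.
  { have [b9|b9] := I 9 isT.
    { have [b1|b1] := I 1 isT.
      { slia. }
      { slia. } }
    { slia. } }
  { have [b9|b9] := I 9 isT.
    { have [b1|b1] := I 1 isT.
      { slia. }
      { slia. } }
    { slia. } }
Qed.


Lemma Y_off (a : vec 'I_20) k (Y : nat -> edge 'I_20 -> nat) :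
  (forall e, Y 0 e + Y 1 e + Y 2 e = k * a.1 e) -> (forall e, a.1 e <= v.1 e) ->
  forall t e, t < 3 -> ~~ memS all30 e -> Y t e = 0.
Proof.
move=> S l t e Ht He.
have : a.1 e = 0 by apply/eqP; rewrite -leqn0; move: (l e); rewrite /= ffunE (negbTE He).
move=> A; have := S e; rewrite A muln0.
by case: t Ht => [|[|[|]]] // _; slia.
Qed.

Lemma Y_zero (a : vec 'I_20) k (Y : nat -> edge 'I_20 -> nat) t :
  (forall x, \sum_(e : edge 'I_20 | x \in val e) Y t e = k * a.2 (cp t)) -> a.2 (cp t) = 0 ->
  forall e, Y t e = 0.
Proof. by move=> D A; apply: deg_zero => x; rewrite D A muln0. Qed.

Lemma irred_v : irred (@PM 'I_20) v.
Proof.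
split; first by exists 2; split => //; rewrite double_v; apply: Ncomb_sumL; exact: allpm_Lv.
split.
  move=> E; have := v2cp (isT : 0 < 3); rewrite E /= ffunE //.
move=> a b Na Nb Hab.
have Hv1 e : a.1 e + b.1 e = v.1 e by rewrite Hab /= ffunE.
have Hv2 c : a.2 c + b.2 c = v.2 c by rewrite Hab /= ffunE.
have la2 c : a.2 c <= v.2 c by rewrite -Hv2 leq_addr.
have lb2 c : b.2 c <= v.2 c by rewrite -Hv2 leq_addl.
have la1 e : a.1 e <= v.1 e by rewrite -Hv1 leq_addr.
have lb1 e : b.1 e <= v.1 e by rewrite -Hv1 leq_addl.
have [ka [Ya [ka0 Sa Da Za Oa]]] := decomp Na la2.
have [kb [Yb [kb0 Sb Db Zb Ob]]] := decomp Nb lb2.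
have Ya0 := Y_off Sa la1.
have Yb0 := Y_off Sb lb1.
pose g t n := kb * Ya t (mk n) + ka * Yb t (mk n).
have gS n : n < 30 -> g 0 n + g 1 n + g 2 n = ka * kb.
  move=> Hn; rewrite /g; apply: (arith1 (Sa (mk n)) (Sb (mk n))).
  by rewrite Hv1 v1mk.
have gD t m : t < 3 -> m < 20 -> g t (nb m 0) + g t (nb m 1) + g t (nb m 2) = ka * kb.
  move=> Ht Hm; rewrite /g.
  have := Da t (ov m) Ht; have := Db t (ov m) Ht.
  rewrite !sum_vertex3; try by move=> e He; [exact: (Ya0 t e Ht He) || exact: (Yb0 t e Ht He)].
  rewrite /= modn_small // => Eb Ea.
  apply: (arith1 Ea Eb); by rewrite Hv2 v2cp.
have gZ t n : t < 3 -> n < 30 -> crossn t n = false -> g t n = 0.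
  by move=> Ht Hn Hc; rewrite /g Za // Zb // !muln0.
have Ka : 0 < ka * kb by rewrite muln_gt0 ka0.
have a01 t : t < 3 -> a.2 (cp t) = 0 \/ a.2 (cp t) = 1.
  move=> Ht; have := la2 (cp t); rewrite v2cp //; case: (a.2 (cp t)) => [|[|]]; by [left|right|].
have b_of t : t < 3 -> b.2 (cp t) = 1 - a.2 (cp t).
  by move=> Ht; have := Hv2 (cp t); rewrite v2cp //; slia.
have IA i : i < 3 -> a.2 (cp i) = 1 -> (forall t, t < 3 -> t != i -> a.2 (cp t) = 0) ->
    forall n, n < 30 -> g i n = 0 \/ g i n = ka * kb.
  move=> Hi Ai Aj n Hn.
  have Ybi : Yb i (mk n) = 0 by apply: (Y_zero (fun x => Db i x Hi)); rewrite b_of // Ai.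
  have Yat t : t < 3 -> t != i -> Ya t (mk n) = 0 by move=> Ht Hti; apply: (Y_zero (fun x => Da t x Ht)); apply: Aj.
  have := la1 (mk n); rewrite v1mk // => al.
  have := Sa (mk n); rewrite /g Ybi muln0 addn0.
  case: i Hi Ai Aj Ybi Yat => [|[|[|]]] // _ _ _ _ Yat;
   [rewrite (Yat 1) ?(Yat 2) // | rewrite (Yat 0) ?(Yat 2) // | rewrite (Yat 0) ?(Yat 1) //];
   rewrite ?addn0 ?add0n => ->; case: (a.1 (mk n)) al => [|[|]] // _; rewrite ?muln0 ?muln1;
   by [left | right; rewrite mulnC].
have IB i : i < 3 -> b.2 (cp i) = 1 -> (forall t, t < 3 -> t != i -> b.2 (cp t) = 0) ->
    forall n, n < 30 -> g i n = 0 \/ g i n = ka * kb.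
  move=> Hi Bi Bj n Hn.
  have Yai : Ya i (mk n) = 0.
    apply: (Y_zero (fun x => Da i x Hi)); have := Hv2 (cp i); rewrite v2cp // Bi; slia.
  have Ybt t : t < 3 -> t != i -> Yb t (mk n) = 0 by move=> Ht Hti; apply: (Y_zero (fun x => Db t x Ht)); apply: Bj.
  have := lb1 (mk n); rewrite v1mk // => bl.
  have := Sb (mk n); rewrite /g Yai muln0 add0n.
  case: i Hi Bi Bj Yai Ybt => [|[|[|]]] // _ _ _ _ Ybt;
   [rewrite (Ybt 1) ?(Ybt 2) // | rewrite (Ybt 0) ?(Ybt 2) // | rewrite (Ybt 0) ?(Ybt 1) //];
   rewrite ?addn0 ?add0n => ->; case: (b.1 (mk n)) bl => [|[|]] // _; rewrite ?muln0 ?muln1;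
   by [left | right].
have bz t : t < 3 -> a.2 (cp t) = 1 -> b.2 (cp t) = 0 by move=> Ht A; rewrite b_of // A.
have bo t : t < 3 -> a.2 (cp t) = 0 -> b.2 (cp t) = 1 by move=> Ht A; rewrite b_of // A.
have C := core Ka gS gD gZ.
case: (a01 0 isT) => A0; case: (a01 1 isT) => A1; case: (a01 2 isT) => A2.
all: first
  [ by left; apply: Oa => t; case: t => [|[|[|]]]
  | by right; apply: Ob => t; case: t => [|[|[|]]] // _; exact: bz
  | by exfalso; apply: (C 0 isT); apply: (IA 0 isT A0) => t; case: t => [|[|[|]]]
  | by exfalso; apply: (C 0 isT); apply: (IB 0 isT (bo 0 isT A0)) => t; case: t => [|[|[|]]] // _ _; exact: bz
  | by exfalso; apply: (C 1 isT); apply: (IA 1 isT A1) => t; case: t => [|[|[|]]]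
  | by exfalso; apply: (C 1 isT); apply: (IB 1 isT (bo 1 isT A1)) => t; case: t => [|[|[|]]] // _ _; exact: bz
  | by exfalso; apply: (C 2 isT); apply: (IA 2 isT A2) => t; case: t => [|[|[|]]]
  | by exfalso; apply: (C 2 isT); apply: (IB 2 isT (bo 2 isT A2)) => t; case: t => [|[|[|]]] // _ _; exact: bz ].
Qed.


Lemma notPM : ~ PM v.
Proof.
case=> c [q [_ E]].
have h0 := v2cp (isT : 0 < 3); have h1 := v2cp (isT : 1 < 3).
rewrite E /= ffunE in h0; rewrite E /= ffunE in h1.
move: h0 h1 c01; case: (eqVneq (cp 0) c) => [<-|] //.
by rewrite [cp 1 == _]eq_sym; case: (cp 0 == cp 1).
Qed.

Lemma notNcomb : ~ Ncomb (@PM 'I_20) v.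
Proof.
case/Ncomb_inv => [E|[m [u [Hm [Hu E]]]]].
  by have := v2cp (isT : 0 < 3); rewrite E /= ffunE.
have [_ [_ Hirr]] := irred_v.
have Nm : Nbar (@PM 'I_20) m by apply: Nbar_of_Ncomb; apply: Ncomb_single.
case: (Hirr m u Nm (Nbar_of_Ncomb Hu) E) => [m0|u0].
  case: Hm => c [q [_ Em]].
  by have := congr1 (fun w : vec 'I_20 => w.2 c) m0; rewrite Em /= !ffunE eqxx.
by apply: notPM; rewrite E u0 vadd0r.
Qed.

Theorem mainTheorem14 :
  exists (V : finType) (v : vec V),
    #|V| = 20 /\
    Nbar (@PM V) v /\ problem v /\ Ncomb (@PM V) (vscale 2 v) /\
    additional_generator v /\
    cubic (Ev v) /\ bipartite (Ev v) /\ ~ Bfactorizable (Ev v).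
Proof.
exists ('I_20 : finType), v.
have [Nv _] := irred_v.
split; first exact: card_ord.
split; first exact: Nv.
split; first exact: problem_v.
split; first by rewrite double_v; apply: Ncomb_sumL; exact: allpm_Lv.
split; first by split; [exact: hilbert irred_v | exact: notPM].
split; first exact: cubic_v.
split; first exact: bip_v.
move=> Hb; apply: notNcomb; apply: Hb => //.
by apply/ffunP => e; rewrite /chiE /= !ffunE inEv.
Qed.
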